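(* Let $N$ be a finite nonempty set, $p\notin N$ and $N'=N\cup\{p\}$. Let $\mathscr{C}^1\neq\mathscr{C}^2$ be minimal balanced collections on $N$ with balancing weights $\lambda^{\mathscr{C}^1},\lambda^{\mathscr{C}^2}$, and let $\mathscr{C}=\mathscr{C}^1\cup\mathscr{C}^2=\{S_1,\dots,S_k\}$. Assume that the $n\times k$ matrix $A^{\mathscr{C}}$ with columns $\mathbf{1}^{S_1},\dots,\mathbf{1}^{S_k}$ has rank $k-1$. Define $\mu,\nu\in\mathbb{R}^{\mathscr{C}}$ by $\mu_S=\lambda^{\mathscr{C}^1}_S$ if $S\in\mathscr{C}^1$ and $\mu_S=0$ otherwise, and $\nu_S=\lambda^{\mathscr{C}^2}_S$ if $S\in\mathscr{C}^2$ and $\nu_S=0$ otherwise. Let $I\subseteq[k]$ be such that $\mu_I\neq\nu_I$ (where $\mu_I=\sum_{i\in I}\mu_{S_i}$, similarly $\nu_I$) and $$t^I=\frac{1-\mu_I}{\nu_I-\mu_I}\in\,]0,1[.$$ Then $\mathscr{C}'=\{S_i\cup\{p\}\mid i\in I\}\cup\{S_i\mid i\in[k]\setminus I\}$ is a minimal balanced collection on $N'$, with balancing weights $(1-t^I)\mu_{S_i}+t^I\nu_{S_i}$ for the set coming from $S_i$.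
   Context: For $T\subseteq N$, $\mathbf{1}^T\in\mathbb{R}^N$ denotes the characteristic vector of $T$; $n=|N|$. A collection $\mathscr{B}$ of nonempty subsets of a finite set $N$ is balanced if there exist positive weights $(\lambda_S)_{S\in\mathscr{B}}$ (balancing weights) with $\sum_{S\in\mathscr{B}}\lambda_S\mathbf{1}^S=\mathbf{1}^N$. A balanced collection is minimal if it contains no balanced proper subcollection; equivalently, its system of balancing weights is unique. $[k]=\{1,\dots,k\}$. *)

(* Defs.v *)
From HB Require Import structures.
From mathcomp Require Import all_boot all_order all_algebra.
From mathcomp Require Import reals.
Set Implicit Arguments. Unset Strict Implicit. Unset Printing Implicit Defensive.
Import Order.TTheory GRing.Theory Num.Theory.
Local Open Scope ring_scope.

Section Balanced.
Variables (R : realType) (T : finType).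

Definition collection_on (N : {set T}) (C : {set {set T}}) : Prop :=
  forall S, S \in C -> S != set0 /\ S \subset N.

Definition balancing_weights (N : {set T}) (C : {set {set T}})
    (lam : {set T} -> R) : Prop :=
  (forall S, S \in C -> 0 < lam S) /\
  (forall x : T, \sum_(S in C) lam S * (x \in S)%:R = (x \in N)%:R).

Definition balanced (N : {set T}) (C : {set {set T}}) : Prop :=
  collection_on N C /\ exists lam, balancing_weights N C lam.

Definition minimal_balanced (N : {set T}) (C : {set {set T}}) : Prop :=
  balanced N C /\ forall D : {set {set T}}, D \proper C -> ~ balanced N D.

Definition char_matrix (N : {set T}) (C : {set {set T}}) :
    'M[R]_(#|N|, #|C|) :=
  \matrix_(r < #|N|, i < #|C|)
     ((enum_val (A := mem N) r \in enum_val (A := mem C) i)%:R).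

End Balanced.

(* Main.v *)
Require Import Defs.
From HB Require Import structures.
From mathcomp Require Import all_boot all_order all_algebra.
From mathcomp Require Import reals.
From mathcomp Require Import ring lra.
Import Order.TTheory GRing.Theory Num.Theory.
Local Open Scope ring_scope.

Lemma ker_line (F : fieldType) k n (A : 'M[F]_(n,k)) (d y : 'rV[F]_k) :
  \rank A = (k-1)%N -> d != 0 -> d *m A^T = 0 -> y *m A^T = 0 ->
  exists a, y = a *: d.
Proof.
move=> rA d0 dA yA.
have dK : (d <= kermx A^T)%MS by rewrite sub_kermx dA.
have yK : (y <= kermx A^T)%MS by rewrite sub_kermx yA.
have kpos : (0 < k)%N.
  have := rank_leq_col d; rewrite rank_rV d0; done.
have rK : \rank (kermx A^T) = 1%N.
  by rewrite mxrank_ker mxrank_tr rA; case: k kpos {A d y rA d0 dA yA dK yK} => // k _; rewrite subn1 /= subSnn.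
have [_ E] := mxrank_leqif_eq dK.
have : (d == kermx A^T)%MS by rewrite -E rK rank_rV d0.
move=> /eqmxP eq.
apply/sub_rVP. by rewrite -eq in yK.
Qed.
Lemma sum_ext (R : realType) (T : finType) (C D : {set {set T}}) (lam g : {set T} -> R) :
  D \subset C ->
  \sum_(i < #|C|) (if enum_val (A := mem C) i \in D then lam (enum_val (A := mem C) i) else 0)
     * g (enum_val (A := mem C) i) = \sum_(X in D) lam X * g X.
Proof.
move=> DC.
rewrite -(big_enum_val (A := mem C) (fun X => (if X \in D then lam X else 0) * g X)) /=.
rewrite big_mkcond [RHS]big_mkcond; apply: eq_bigr => X _.
case XD: (X \in D); first by rewrite (subsetP DC).
by case: (X \in C); rewrite ?mul0r.
Qed.

Lemma sum_sub (R : realType) (T : finType) (C D : {set {set T}}) (f : {set T} -> R) :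
  D \subset C ->
  \sum_(X in C) (if X \in D then f X else 0) = \sum_(X in D) f X.
Proof.
move=> DC; rewrite big_mkcond [RHS]big_mkcond; apply: eq_bigr => X _.
case XD: (X \in D); first by rewrite (subsetP DC).
by case: (X \in C).
Qed.

Theorem lemma4p4 (R : realType) (T : finType) (N : {set T}) (p : T)
    (C1 C2 : {set {set T}}) (lam1 lam2 : {set T} -> R)
    (I : {set 'I_#|C1 :|: C2|}) :
  N != set0 -> p \notin N ->
  minimal_balanced R N C1 -> minimal_balanced R N C2 -> C1 != C2 ->
  balancing_weights N C1 lam1 -> balancing_weights N C2 lam2 ->
  \rank (char_matrix R N (C1 :|: C2)) = (#|C1 :|: C2| - 1)%N ->
  let S := fun i : 'I_#|C1 :|: C2| => enum_val (A := mem (C1 :|: C2)) i in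
  let mu := fun X : {set T} => if X \in C1 then lam1 X else 0 in
  let nu := fun X : {set T} => if X \in C2 then lam2 X else 0 in
  let muI := \sum_(i in I) mu (S i) in
  let nuI := \sum_(i in I) nu (S i) in
  muI != nuI ->
  let t := (1 - muI) / (nuI - muI) in
  0 < t < 1 ->
  let S' := fun i : 'I_#|C1 :|: C2| => if i \in I then p |: S i else S i in
  let C' := [set S' i | i : 'I_#|C1 :|: C2|] in
  minimal_balanced R (p |: N) C' /\
  exists w : {set T} -> R, balancing_weights (p |: N) C' w /\
    forall i, w (S' i) = (1 - t) * mu (S i) + t * nu (S i).
Proof.
move=> N0 pN [[colC1 _] _] [[colC2 _] _] C12 [pos1 bal1] [pos2 bal2] rk.
move=> S mu nu muI nuI mInu t /andP[t0 t1] S' C'.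
have HS i : S i \in C1 :|: C2 by exact: enum_valP.
have HSN i : S i \subset N.
  by have := HS i; rewrite in_setU => /orP[/colC1|/colC2] [].
have HS0 i : S i != set0.
  by have := HS i; rewrite in_setU => /orP[/colC1|/colC2] [].
have pS i : p \notin S i by apply/negP => /(subsetP (HSN i)); rewrite (negbTE pN).
have pS' i : (p \in S' i) = (i \in I).
  by rewrite /S'; case: ifP => _; rewrite ?setU11 // (negbTE (pS i)).
have xS' i x : x != p -> (x \in S' i) = (x \in S i).
  by move=> xp; rewrite /S'; case: ifP => _ //; rewrite in_setU1 (negbTE xp).
have S'inj : injective S'.
  move=> i j; rewrite /S'.
  have Sinj : injective S by apply: enum_val_inj.
  have hp : forall a b, p |: S a = S b -> False.
    by move=> a b E; have := setU11 p (S a); rewrite E (negbTE (pS b)).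
  case: ifP => _; case: ifP => _.
  - move=> E; apply: Sinj; apply/setP => x.
    have := congr1 (fun Y : {set T} => x \in Y) E; rewrite /= !in_setU1.
    case: eqP => [-> _|_ //]; by rewrite (negbTE (pS i)) (negbTE (pS j)).
  - by move/hp.
  - by move/esym/hp.
  - by apply: Sinj.
have musum x : \sum_i mu (S i) * (x \in S i)%:R = (x \in N)%:R.
  by rewrite (@sum_ext R T _ C1 lam1 (fun X => (x \in X)%:R) (subsetUl C1 C2)); exact: bal1.
have nusum x : \sum_i nu (S i) * (x \in S i)%:R = (x \in N)%:R.
  by rewrite (@sum_ext R T _ C2 lam2 (fun X => (x \in X)%:R) (subsetUr C1 C2)); exact: bal2.
have mu0 X : 0 <= mu X by rewrite /mu; case: ifP => // /pos1 /ltW.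
have nu0 X : 0 <= nu X by rewrite /nu; case: ifP => // /pos2 /ltW.
have nmI : nuI - muI != 0 by rewrite subr_eq0 eq_sym.
pose v i := (1 - t) * mu (S i) + t * nu (S i).
have vpos i : 0 < v i.
  have := HS i; rewrite in_setU /v => /orP[H|H].
    have : 0 < mu (S i) by rewrite /mu H; exact: pos1.
    have := nu0 (S i); nra.
  have : 0 < nu (S i) by rewrite /nu H; exact: pos2.
  have := mu0 (S i); nra.
have sumC' (f : {set T} -> R) : \sum_(X in C') f X = \sum_i f (S' i).
  by rewrite /C' big_imset //; move=> a b _ _; apply: S'inj.
have col' : collection_on (p |: N) C'.
  move=> X /imsetP [i _ ->]; split.
    rewrite /S'; case: ifP => _; last exact: HS0.
    by apply/set0Pn; exists p; rewrite setU11.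
  rewrite /S'; case: ifP => _; first by rewrite setUS.
  exact: subset_trans (HSN i) (subsetUr _ _).
have vsum x : \sum_i v i * (x \in S' i)%:R = (x \in p |: N)%:R.
  have [->|xp] := eqVneq x p.
    rewrite setU11.
    under eq_bigr do rewrite pS'.
    have -> : \sum_i v i * (i \in I)%:R = \sum_(i in I) v i.
      by rewrite [RHS]big_mkcond; apply: eq_bigr => i _; case: (i \in I); rewrite ?mulr1 ?mulr0.
    rewrite /v big_split -!mulr_sumr -/muI -/nuI /t.
    change ((1 - (1 - muI) / (nuI - muI)) * muI + (1 - muI) / (nuI - muI) * nuI = 1).
    by field.
  under eq_bigr => i _ do rewrite (xS' i x xp).
  rewrite /v; under eq_bigr do rewrite mulrDl -!mulrA.
  rewrite big_split -!mulr_sumr musum nusum in_setU1 (negbTE xp) /=. by rewrite mulrA -/t -mulrDl subrK mul1r.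
pose w X := \sum_i (if S' i == X then v i else 0).
have wS' j : w (S' j) = v j.
  rewrite /w (bigD1 j) //= eqxx big1 ?addr0 // => i ij.
  by rewrite (inj_eq S'inj) (negbTE ij).
have bw : balancing_weights (p |: N) C' w.
  split.
    by move=> X /imsetP [i _ ->]; rewrite wS'.
  move=> x; rewrite sumC' -vsum; apply: eq_bigr => i _; by rewrite wS'.
split; last by exists w; split => // i; rewrite wS'.
split; first by split => //; exists w.
move=> D /properP [DC' [X XC' XD]] [_ [rho [rhopos rhobal]]].
pose r i := if S' i \in D then rho (S' i) else 0.
have rsum x : \sum_i r i * (x \in S' i)%:R = (x \in p |: N)%:R.
  rewrite -rhobal -(@sum_sub R T C' D (fun X => rho X * (x \in X)%:R) DC') sumC'.
  by apply: eq_bigr => i _; rewrite /r; case: ifP; rewrite ?mul0r.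
have rI : \sum_(i in I) r i = 1.
  have E := rsum p; rewrite setU11 in E.
  transitivity (true%:R : R); last by [].
  rewrite -E big_mkcond; apply: eq_bigr => i _; rewrite pS'.
  by case: (i \in I); rewrite ?mulr1 ?mulr0.
pose A := char_matrix R N (C1 :|: C2).
pose d : 'rV[R]_#|C1 :|: C2| := \row_i (nu (S i) - mu (S i)).
pose y : 'rV[R]_#|C1 :|: C2| := \row_i (r i - mu (S i)).
have Aj j i : A^T i j = (enum_val (A := mem N) j \in S i)%:R by rewrite /A /char_matrix !mxE.
have jN j : enum_val (A := mem N) j \in N := enum_valP j.
have jp j : enum_val (A := mem N) j != p.
  by apply/eqP => E; move: (jN j); rewrite E (negbTE pN).
have dA : d *m A^T = 0.
  apply/rowP => j; rewrite !mxE.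
  under eq_bigr => i _ do rewrite Aj !mxE mulrBl.
  by rewrite sumrB nusum musum subrr.
have yA : y *m A^T = 0.
  apply/rowP => j; rewrite !mxE.
  under eq_bigr => i _ do rewrite Aj !mxE mulrBl.
  rewrite sumrB musum.
  under eq_bigr => i _ do rewrite -(xS' i _ (jp j)).
  by rewrite rsum in_setU1 (negbTE (jp j)) subrr.
have d0 : d != 0.
  apply: contra mInu => /eqP dd; rewrite /muI /nuI; apply/eqP; apply: eq_bigr => i _.
  by have := congr1 (fun M : 'rV[R]__ => M 0 i) dd; rewrite !mxE => /eqP; rewrite subr_eq0 eq_sym => /eqP.
have [a ya] := @ker_line _ _ _ A d y rk d0 dA yA.
have ri i : r i - mu (S i) = a * (nu (S i) - mu (S i)).
  by have := congr1 (fun M : 'rV[R]__ => M 0 i) ya; rewrite !mxE.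
have aT : a = t.
  have E : 1 - muI = a * (nuI - muI).
    rewrite -rI /muI /nuI -!sumrB mulr_sumr; apply: eq_bigr => i _; exact: ri.
  by rewrite /t E mulfK.
have rv i : r i = v i.
  by rewrite /v -[r i](subrK (mu (S i))) ri aT; ring.
move: XC' => /imsetP [i _ EX].
have := vpos i; rewrite -rv /r; case: ifP => [H _|_]; last by rewrite ltxx.
by move: XD; rewrite EX H.
Qed.
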